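(* Fix $L\neq0$. Consider the system, in time $\tau$, $$\xi''=2\xi^3+2h\xi+\frac{L^2}{\xi^3},\qquad \eta''=-2\eta^3+2h\eta+\frac{L^2}{\eta^3},$$ for positive functions $\xi,\eta$ subject to the constraints $$\xi'^2=\xi^4+2h\xi^2+2(c+1)-\frac{L^2}{\xi^2},\qquad \eta'^2=-\eta^4+2h\eta^2-2(c-1)-\frac{L^2}{\eta^2}$$ for some real constants $h,c$. Then there exist $h,c\in\mathbb R$ and a periodic solution $(\xi(\tau),\eta(\tau))$ of this system if and only if $L^2\le\big(\frac{16}{27}\big)^{3/2}$.
   Context: This is the separated form of the spatial Stark problem $\ddot x=-x/|q|^3$, $\ddot y=-y/|q|^3$, $\ddot z=-z/|q|^3+1$ in parabolic coordinates $x=\xi\eta\cos\phi$, $y=\xi\eta\sin\phi$, $z=\frac12(\xi^2-\eta^2)$, with $dt=(\xi^2+\eta^2)d\tau$, where $h$ is the energy $\frac12|\dot q|^2-\frac1{|q|}-z$, $L=x\dot y-y\dot x$ the $z$-component of angular momentum, and $c$ the separation constant. Constant solutions count as periodic. *)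

(* Defs.v *)
From Stdlib Require Import Reals.
From Coquelicot Require Import Coquelicot.
Open Scope R_scope.

Definition separated_stark_solution (L h c : R) (xi eta : R -> R) : Prop :=
  exists xi' eta' : R -> R,
    forall t : R,
      0 < xi t /\ 0 < eta t /\
      is_derive xi t (xi' t) /\ is_derive eta t (eta' t) /\
      is_derive xi' t (2 * xi t ^ 3 + 2 * h * xi t + L ^ 2 / xi t ^ 3) /\
      is_derive eta' t (- 2 * eta t ^ 3 + 2 * h * eta t + L ^ 2 / eta t ^ 3) /\
      xi' t ^ 2 = xi t ^ 4 + 2 * h * xi t ^ 2 + 2 * (c + 1) - L ^ 2 / xi t ^ 2 /\
      eta' t ^ 2 = - eta t ^ 4 + 2 * h * eta t ^ 2 - 2 * (c - 1) - L ^ 2 / eta t ^ 2.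

(* periodicity of the pair (constant solutions are periodic: any T > 0 works) *)
Definition periodic_pair (xi eta : R -> R) : Prop :=
  exists T : R, 0 < T /\ forall t : R, xi (t + T) = xi t /\ eta (t + T) = eta t.

(* Main.v *)
Require Import Defs.
From Stdlib Require Import Reals Lra Psatz.
From Coquelicot Require Import Coquelicot.
Open Scope R_scope.

Lemma amgm3 x y z : 0 <= x -> 0 <= y -> 0 <= z -> 3*x*y*z <= x^3+y^3+z^3.
Proof.
  intros. assert (x^3+y^3+z^3 - 3*x*y*z = (x+y+z)*((x-y)^2+(y-z)^2+(z-x)^2)/2) by field.
  assert (0 <= (x+y+z)*((x-y)^2+(y-z)^2+(z-x)^2)) by (apply Rmult_le_pos; [lra | pose proof (pow2_ge_0 (x-y)); pose proof (pow2_ge_0 (y-z)); pose proof (pow2_ge_0 (z-x)); lra]). lra.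
Qed.

Lemma cube_root A : 0 < A -> exists a, 0 < a /\ a^3 = A.
Proof.
  intros HA. exists (Rpower A (1/3)). split. unfold Rpower; apply exp_pos.
  rewrite <- Rpower_pow by (unfold Rpower; apply exp_pos).
  rewrite Rpower_mult. replace (1/3 * INR 3) with 1 by (simpl; field). apply Rpower_1; auto.
Qed.

Lemma ineq_core A B r v : 0 < A -> 0 < B -> 0 < r -> 0 < v ->
  (v+A)*(v+B)*(v+r) <= 4*v -> (A*B*r)^2 <= (16/27)^3.
Proof.
  intros HA HB Hr Hv H.
  destruct (cube_root A HA) as [a [Ha Ea]].
  destruct (cube_root B HB) as [b [Hb Eb]].
  destruct (cube_root r Hr) as [c [Hc Ec]].
  set (g := a*b*c).
  assert (Hg : 0 < g) by (unfold g; apply Rmult_lt_0_compat; [apply Rmult_lt_0_compat|]; auto).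
  assert (E1 : 3*g <= A+B+r) by (subst; unfold g; pose proof (amgm3 a b c); lra).
  assert (E2 : 3*g^2 <= A*B+B*r+r*A).
  { subst. unfold g. pose proof (amgm3 (a*b) (b*c) (c*a)). nra. }
  assert (E3 : A*B*r = g^3) by (subst; unfold g; ring).
  assert (H1 : (v+g)^3 <= 4*v).
  { assert ((v+A)*(v+B)*(v+r) = v^3 + (A+B+r)*v^2 + (A*B+B*r+r*A)*v + A*B*r) by ring.
    assert ((v+g)^3 = v^3 + (3*g)*v^2 + (3*g^2)*v + g^3) by ring. nra. }
  set (w := v+g) in *.
  assert (Hw4 : w^3 <= 4*w - 4*g) by (unfold w in *; lra).
  assert (Hx : 0 < w^2 < 4) by (unfold w in *; nra).
  assert (16*g^2 <= w^2*(4-w^2)^2).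
  { assert (0 < 4*g <= w*(4-w^2)) by (split; nra).
    assert ((4*g)^2 <= (w*(4-w^2))^2) by (apply pow_incr; lra). nra. }
  assert (w^2*(4-w^2)^2 <= 256/27).
  { assert (256/27 - w^2*(4-w^2)^2 = (w^2-4/3)^2*(16/3-w^2)) by field.
    assert (0 <= (w^2-4/3)^2*(16/3-w^2)) by (apply Rmult_le_pos; [apply pow2_ge_0|lra]). lra. }
  assert (g^2 <= 16/27) by lra.
  rewrite E3. replace ((g^3)^2) with ((g^2)^3) by ring. apply pow_incr. split; [nra|lra].
Qed.
Lemma constant_family l : 0 < l -> l^2 <= (16/27)^3 -> exists u v h c, 0<u /\ 0<v /\
  2*u^3+2*h*u^2+l=0 /\ u^3+2*h*u^2+2*(c+1)*u-l=0 /\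
  2*v^3-2*h*v^2-l = 0 /\ -v^3+2*h*v^2-2*(c-1)*v-l=0.
Proof.
  intros Hl Hl2.
  set (f := fun z => z*(1-z^4/16)^2/2).
  set (s0 := 2/sqrt 3).
  assert (S3 : sqrt 3 * sqrt 3 = 3) by (apply sqrt_sqrt; lra).
  assert (S3p : 0 < sqrt 3) by (apply sqrt_lt_R0; lra).
  assert (Hse : s0 * sqrt 3 = 2) by (unfold s0; field; lra).
  assert (Hs0p : 0 < s0) by (unfold s0; apply Rdiv_lt_0_compat; lra).
  assert (Hs02 : s0^2 = 4/3).
  { assert (s0^2 * (sqrt 3 * sqrt 3) = 4) by (replace 4 with ((s0*sqrt 3)^2) by (rewrite Hse; ring); ring). rewrite S3 in H. lra. }
  assert (Hs0 : 0 < s0 < 2) by (split; nra).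
  destruct (IVT_cor (fun z => (f z)^2 - l^2) 0 s0) as [z [Hz Ez]].
  - unfold f. reg.
  - lra.
  - unfold f. assert (Hf : (s0 * (1 - s0 ^ 4 / 16) ^ 2 / 2) ^ 2 = (16/27)^3).
    { replace ((s0 * (1 - s0 ^ 4 / 16) ^ 2 / 2) ^ 2) with (s0^2 * (1 - (s0^2)^2 / 16) ^ 4 / 4) by field.
      rewrite Hs02. field. }
    rewrite Hf. nra.
  - assert (Hz0 : 0 < z).
    { assert (H0 : 0 <= z) by lra. destruct (Rle_lt_or_eq_dec 0 z H0) as [|E]; [auto|]. subst z. unfold f in Ez. nra. }
    assert (Hz2 : z < 2) by lra.
    assert (Hfz : f z = l).
    { assert (0 < f z). { unfold f. assert (z^2 < 4) by nra. assert (0 < 1 - z^4/16) by (replace (z^4) with (z^2*z^2) by ring; nra). 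
        apply Rdiv_lt_0_compat; [apply Rmult_lt_0_compat; [lra| nra]|lra]. }
      nra. }
    unfold f in Hfz.
    set (d := z^3/4). set (u := (z+d)/2). set (v := (z-d)/2).
    assert (Hv : 0 < v) by (unfold v, d; nra).
    assert (Hu : 0 < u) by (unfold u, d; nra).
    exists u, v, (v - l/(2*v^2)), ((-3*u^2-4*(v - l/(2*v^2))*u)/2 - 1).
    subst l. unfold u, v, d in *. repeat split; try lra; field; lra.
Qed.
Lemma local_max_deriv f l a b c : a < c < b -> is_derive f c l ->
  (forall x, a < x < b -> f x <= f c) -> l = 0.
Proof.
  intros [H1 H2] Hd Hm. apply is_derive_Reals in Hd.
  pose (pr := exist _ l Hd : derivable_pt f c).
  pose proof (deriv_maximum f a b c pr H1 H2 (fun x h1 h2 => Hm x (conj h1 h2))). exact H.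
Qed.

Lemma local_min_deriv f l a b c : a < c < b -> is_derive f c l ->
  (forall x, a < x < b -> f c <= f x) -> l = 0.
Proof.
  intros Hc Hd Hm. assert (- l = 0).
  { apply (local_max_deriv (fun t => - f t) (-l) a b c Hc). apply (is_derive_opp f c l Hd).
    intros x Hx. specialize (Hm x Hx). lra. }
  lra.
Qed.

Lemma Kfact : let K := Rpower (16/27) (3/2) in 0 < K /\ K^2 = (16/27)^3.
Proof.
  split. unfold Rpower; apply exp_pos.
  replace (Rpower (16/27) (3/2) ^ 2) with (Rpower (16/27) (3/2) * Rpower (16/27) (3/2)) by ring.
  rewrite <- Rpower_plus. replace (3/2+3/2) with (INR 3) by (simpl; field).
  apply Rpower_pow. lra.
Qed.

Lemma sqmul x h c L : 0 < x ->
  x^2 * (x^4 + 2*h*x^2 + 2*(c+1) - L^2/x^2) = (x^2)^3 + 2*h*(x^2)^2 + 2*(c+1)*x^2 - L^2.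
Proof. intros. field. lra. Qed.

Lemma sqmul2 y h c L : 0 < y ->
  y^2 * (- y^4 + 2*h*y^2 - 2*(c-1) - L^2/y^2) = - (y^2)^3 + 2*h*(y^2)^2 - 2*(c-1)*y^2 - L^2.
Proof. intros. field. lra. Qed.

Lemma only_if L h c xi eta : L <> 0 ->
  separated_stark_solution L h c xi eta -> periodic_pair xi eta ->
  (L^2)^2 <= (16/27)^3.
Proof.
  intros hL [xi' [eta' Hs]] [T [HT Hp]].
  assert (Hcont : forall t, continuity_pt xi t).
  { intros t. destruct (Hs t) as [_ [_ [Hd _]]]. apply is_derive_Reals in Hd.
    apply derivable_continuous_pt. exact (exist _ _ Hd). }
  assert (Hper : forall t, 0 <= t <= 3*T -> exists s, 0 <= s <= T /\ xi t = xi s).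
  { intros t Ht. destruct (Rle_dec t T).
    - exists t; split; [lra|auto].
    - destruct (Rle_dec t (2*T)).
      + exists (t - T). split; [lra|]. destruct (Hp (t-T)) as [E _]. rewrite <- E. f_equal; ring.
      + exists (t - 2*T). split; [lra|]. destruct (Hp (t-2*T)) as [E _].
        destruct (Hp (t-2*T+T)) as [E' _]. rewrite <- E, <- E'. f_equal; ring. }
  destruct (continuity_ab_min xi 0 T) as [tm [Htm Htm']]; [lra| intros; apply Hcont|].
  destruct (continuity_ab_min (fun t => - xi t) 0 T) as [tM [HtM HtM']]; [lra| intros; apply continuity_pt_opp; apply Hcont|].
  simpl in HtM.
  assert (EM : xi (tM + T) = xi tM) by apply Hp.
  assert (Em : xi (tm + T) = xi tm) by apply Hp.
  assert (Hbnd : forall t, 0 <= t <= 3*T -> xi tm <= xi t <= xi tM).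
  { intros t Ht. destruct (Hper t Ht) as [s [Hs1 Hs2]]. rewrite Hs2.
    split; [apply Htm; auto| specialize (HtM s Hs1); lra]. }
  set (m := xi tm) in *. set (M := xi tM) in *.
  destruct (Hs (tM+T)) as [HMp [_ [HdM [_ [HddM [_ [EqM _]]]]]]].
  destruct (Hs (tm+T)) as [Hmp [_ [Hdm [_ [_ [_ [Eqm _]]]]]]].
  rewrite EM in HMp, HddM, EqM. rewrite Em in Hmp, Eqm.
  assert (Z1 : xi' (tM+T) = 0).
  { apply (local_max_deriv xi _ 0 (3*T) (tM+T)); [lra|auto|]. intros x Hx. rewrite EM. apply Hbnd; lra. }
  assert (Z2 : xi' (tm+T) = 0).
  { apply (local_min_deriv xi _ 0 (3*T) (tm+T)); [lra|auto|]. intros x Hx. rewrite Em. apply Hbnd; lra. }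
  rewrite Z1 in EqM. rewrite Z2 in Eqm.
  set (A := m^2). set (B := M^2).
  assert (PA : A^3 + 2*h*A^2 + 2*(c+1)*A - L^2 = 0).
  { unfold A; rewrite <- sqmul by lra. rewrite <- Eqm. ring. }
  assert (PB : B^3 + 2*h*B^2 + 2*(c+1)*B - L^2 = 0).
  { unfold B; rewrite <- sqmul by lra. rewrite <- EqM. ring. }
  assert (HmM : m <= M) by (apply (Hbnd tM); lra).
  assert (HA : 0 < A) by (unfold A; nra).
  assert (HAB : A <= B) by (unfold A, B; nra).
  assert (Hfac : exists r, 0 < r /\ 2*h = -(A+B+r) /\ 2*(c+1) = A*B+(A+B)*r /\ L^2 = A*B*r).
  { destruct (Rle_lt_or_eq_dec A B HAB) as [Hlt|Heq].
    - set (r := -2*h-A-B).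
      assert (Hk : (A-B)*(A^2+A*B+B^2+2*h*(A+B)+2*(c+1)) = 0) by (rewrite <- (Rminus_diag_eq _ _ (eq_trans PA (eq_sym PB))); ring).
      apply Rmult_integral in Hk. destruct Hk as [Hk|Hk]; [lra|].
      assert (Hc1 : 2*(c+1) = A*B+(A+B)*r) by (unfold r; lra).
      assert (HL : L^2 = A*B*r) by (unfold r in *; nra).
      assert (HP : forall w, w^3 + 2*h*w^2 + 2*(c+1)*w - L^2 = (w-A)*(w-B)*(w-r)).
      { intros w. rewrite Hc1, HL. unfold r. ring. }
      assert (Hr : B <= r).
      { destruct (Rle_dec B r) as [|Hn]; auto. exfalso.
        set (w := (Rmax r A + B)/2).
        assert (Hw1 : A < w < B) by (unfold w, Rmax; destruct (Rle_dec r A); lra).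
        assert (Hw2 : r < w) by (unfold w, Rmax; destruct (Rle_dec r A); lra).
        assert (Hsw : 0 <= sqrt w) by apply sqrt_pos.
        assert (Hsw2 : sqrt w ^ 2 = w) by (simpl; rewrite Rmult_1_r; apply sqrt_sqrt; lra).
        assert (Hs1 : m < sqrt w) by (destruct (Rle_dec (sqrt w) m); [unfold A in *; nra|lra]).
        assert (Hs2 : sqrt w < M) by (destruct (Rle_dec M (sqrt w)); [unfold B in *; nra|lra]).
        destruct (IVT_gen xi (tm+T) (tM+T) (sqrt w)) as [x [_ Hx]].
        { intros t; apply Hcont. }
        { rewrite EM, Em. unfold Rmin, Rmax. destruct (Rle_dec m M); lra. }
        destruct (Hs x) as [_ [_ [_ [_ [_ [_ [Eqx _]]]]]]]. rewrite Hx in Eqx.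
        assert (Hpos : 0 <= w^3 + 2*h*w^2 + 2*(c+1)*w - L^2).
        { rewrite <- Hsw2. rewrite <- sqmul by lra. rewrite <- Eqx.
          apply Rmult_le_pos; [apply pow2_ge_0|apply pow2_ge_0]. }
        rewrite HP in Hpos.
        assert (0 < (w-A)*(w-r)) by (apply Rmult_lt_0_compat; lra).
        assert (0 < (w-A)*(w-r)*(B-w)) by (apply Rmult_lt_0_compat; lra).
        assert ((w-A)*(w-B)*(w-r) = - ((w-A)*(w-r)*(B-w))) by ring. lra. }
      exists r. repeat split; try lra. unfold r; lra.
    -
      assert (HmM' : m = M) by (unfold A, B in Heq; nra).
      assert (Hz : forall t, 0 <= t <= 3*T -> xi' t = 0).
      { intros t Ht. destruct (Hs t) as [_ [_ [_ [_ [_ [_ [Eqt _]]]]]]].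
        assert (xi t = M) by (pose proof (Hbnd t Ht); lra). rewrite H in Eqt.
        rewrite <- EqM in Eqt. apply Rsqr_0_uniq; unfold Rsqr; simpl in Eqt; lra. }
      assert (Hdd : 2 * M ^ 3 + 2 * h * M + L ^ 2 / M ^ 3 = 0).
      { apply (local_max_deriv xi' _ 0 (3*T) (tM+T)); [lra|auto|].
        intros x Hx. rewrite (Hz x) by lra. rewrite (Hz (tM+T)) by lra. lra. }
      assert (HB2 : 2*B^3 + 2*h*B^2 + L^2 = 0).
      { unfold B. replace (2*(M^2)^3 + 2*h*(M^2)^2 + L^2) with (M^3 * (2 * M ^ 3 + 2 * h * M + L ^ 2 / M ^ 3)) by (field; lra).
        rewrite Hdd; ring. }
      set (r := -2*h-2*B).
      assert (HL : L^2 = A*B*r) by (rewrite Heq; unfold r; nra).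
      assert (HB0 : 0 < B) by lra.
      assert (Hc1 : 2*(c+1)*B = (A*B+(A+B)*r)*B) by (rewrite Heq in *; unfold r in *; nra).
      assert (Hc2 : 2*(c+1) = A*B+(A+B)*r) by (apply (Rmult_eq_reg_r B); lra).
      assert (HL2 : 0 < L^2) by (pose proof (pow2_ge_0 L); assert (L^2 <> 0) by (apply pow_nonzero; auto); lra).
      exists r. repeat split; try lra. 
      + apply (Rmult_lt_reg_l (A*B)); [nra|]. rewrite Rmult_0_r. lra.
      + unfold r; lra. }
  destruct Hfac as [r [Hr [Hh [Hc HL]]]].
  destruct (Hs 0) as [_ [He0 [_ [_ [_ [_ [_ Eqe]]]]]]].
  set (v := eta 0 ^ 2).
  assert (Hv : 0 < v) by (unfold v; nra).
  assert (HQ : 0 <= - v^3 + 2*h*v^2 - 2*(c-1)*v - L^2).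
  { unfold v. rewrite <- sqmul2 by lra. rewrite <- Eqe. apply Rmult_le_pos; apply pow2_ge_0. }
  assert (HQ' : - v^3 + 2*h*v^2 - 2*(c-1)*v - L^2 = 4*v - (v+A)*(v+B)*(v+r)).
  { replace (2*h*v^2) with ((2*h)*v^2) by ring. replace (2*(c-1)*v) with ((2*(c+1))*v - 4*v) by ring.
    rewrite Hh, Hc, HL. ring. }
  rewrite HL. apply (ineq_core A B r v); try lra.
Qed.

Lemma is_derive_constR (a x : R) : is_derive (fun _ : R => a) x 0.
Proof. apply is_derive_Reals. apply derivable_pt_lim_const. Qed.

Theorem lemma5p3 (L : R) (hL : L <> 0) :
  (exists (h c : R) (xi eta : R -> R),
      separated_stark_solution L h c xi eta /\ periodic_pair xi eta)
  <-> L ^ 2 <= Rpower (16 / 27) (3 / 2).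
Proof.
  destruct Kfact as [HK HK2].
  assert (HL2 : 0 < L^2) by (pose proof (pow2_ge_0 L); assert (L^2 <> 0) by (apply pow_nonzero; auto); lra).
  split.
  - intros [h [c [xi [eta [Hs Hp]]]]].
    pose proof (only_if L h c xi eta hL Hs Hp).
    set (K := Rpower (16 / 27) (3 / 2)) in *. nra.
  - intros HLK.
    assert (Hl2 : (L^2)^2 <= (16/27)^3).
    { rewrite <- HK2. apply pow_incr. lra. }
    destruct (constant_family (L^2) HL2 Hl2) as [u [v [h [c [Hu [Hv [E1 [E2 [E3 E4]]]]]]]]].
    set (a := sqrt u). set (b := sqrt v).
    assert (Ha : 0 < a) by (apply sqrt_lt_R0; auto).
    assert (Hb : 0 < b) by (apply sqrt_lt_R0; auto).
    assert (Hua : u = a^2) by (unfold a; simpl; rewrite Rmult_1_r; symmetry; apply sqrt_sqrt; lra).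
    assert (Hvb : v = b^2) by (unfold b; simpl; rewrite Rmult_1_r; symmetry; apply sqrt_sqrt; lra).
    rewrite Hua in E1, E2. rewrite Hvb in E3, E4.
    exists h, c, (fun _ => a), (fun _ => b). split.
    + exists (fun _ => 0), (fun _ => 0). intros t.
      split; [lra|]. split; [lra|].
      split; [apply is_derive_constR|]. split; [apply is_derive_constR|].
      split.
      { replace (2 * a ^ 3 + 2 * h * a + L ^ 2 / a ^ 3) with 0.
        apply is_derive_constR.
        replace (L^2) with (-(2 * (a^2) ^ 3 + 2 * h * (a^2) ^ 2)) by lra. field. lra. }
      split.
      { replace (- 2 * b ^ 3 + 2 * h * b + L ^ 2 / b ^ 3) with 0.
        apply is_derive_constR.
        replace (L^2) with (2 * (b^2) ^ 3 - 2 * h * (b^2) ^ 2) by lra. field. lra. }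
      split.
      { replace (L^2) with ((a^2) ^ 3 + 2 * h * (a^2) ^ 2 + 2*(c+1)*a^2) by lra. field. lra. }
      { replace (L^2) with (-(b^2) ^ 3 + 2 * h * (b^2) ^ 2 - 2*(c-1)*b^2) by lra. field. lra. }
    + exists 1. split; [lra|]. intros t; split; reflexivity.
Qed.
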